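(* Suppose (A.1) and (A.2) hold, $k_n\to\infty$, $\log(k_n)/\log(n)\to0$ and $k_n^{1/2}b(\log(n/k_n))\to\lambda\in\mathbb{R}$. (i) Suppose $b$ is ultimately non-positive and let $\alpha=-4\lim_{n\to\infty}b(\log n)\,k_n/\log k_n\in[0,+\infty]$ (assumed to exist). If $\alpha>\theta$, then for $n$ large enough $AMSE(\hat\theta_n^{(2)})<AMSE(\hat\theta_n^{(1)})<AMSE(\hat\theta_n^{(3)})$. If $\alpha<\theta$, then for $n$ large enough $AMSE(\hat\theta_n^{(1)})<\min(AMSE(\hat\theta_n^{(2)}),AMSE(\hat\theta_n^{(3)}))$. (ii) Suppose $b$ is ultimately non-negative and let $\beta=2\lim_{x\to\infty}x\,b(x)\in[0,+\infty]$ (assumed to exist). If $\beta>\theta$, then for $n$ large enough $AMSE(\hat\theta_n^{(3)})<AMSE(\hat\theta_n^{(1)})<AMSE(\hat\theta_n^{(2)})$. If $\beta<\theta$, then for $n$ large enough $AMSE(\hat\theta_n^{(1)})<\min(AMSE(\hat\theta_n^{(2)}),AMSE(\hat\theta_n^{(3)}))$.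
   Context: Let $X_1,\dots,X_n$ be i.i.d. with cdf $F$, order statistics $X_{1,n}\le\dots\le X_{n,n}$, and $1\le k_n<n$. Assumption (A.1): there is $\theta>0$ such that $1-F(x)=\exp(-H(x))$ for $x\ge x_0\ge0$, and $H^{\leftarrow}(t)=\inf\{x:H(x)\ge t\}=t^\theta\ell(t)$ with $\ell$ slowly varying at infinity. Assumption (A.2): there exist $\rho\le0$ and $b$ with $b(x)\to0$ such that, uniformly locally on $\lambda\ge1$, $\log(\ell(\lambda x)/\ell(x))\sim b(x)K_\rho(\lambda)$ as $x\to\infty$, where $K_\rho(\lambda)=\int_1^\lambda u^{\rho-1}du$ (so $|b|$ is regularly varying with index $\rho$). Let $\mu_0(t)=\int_0^\infty\log(1+x/t)e^{-x}dx$, $T_n^{(1)}=\mu_0(\log(n/k_n))$, $T_n^{(2)}=\frac1{k_n}\sum_{i=1}^{k_n}\log\left(1-\frac{\log(i/k_n)}{\log(n/k_n)}\right)$, $T_n^{(3)}=1/\log(n/k_n)$, $\hat\theta_n^{(i)}=\frac{1}{T_n^{(i)}}\frac1{k_n}\sum_{j=1}^{k_n}(\log X_{n-j+1,n}-\log X_{n-k_n+1,n})$, and $a_n^{(i)}=\mu_0(\log(n/k_n))/T_n^{(i)}-1$. The asymptotic mean square error is defined by $AMSE(\hat\theta_n^{(i)})=(\theta a_n^{(i)}+b(\log(n/k_n)))^2+\theta^2/k_n$. *)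

(* Defs.v *)
From Stdlib Require Import Reals Lra.
Open Scope R_scope.

Definition eventually_R (P : R -> Prop) : Prop :=
  exists X : R, forall x : R, X <= x -> P x.

Definition eventually_N (P : nat -> Prop) : Prop :=
  exists N : nat, forall n : nat, (N <= n)%nat -> P n.

Definition lim_infty (f : R -> R) (l : R) : Prop :=
  forall eps : R, 0 < eps -> eventually_R (fun x => Rabs (f x - l) < eps).

Definition is_glb (E : R -> Prop) (m : R) : Prop :=
  (forall x, E x -> m <= x) /\ (forall m', (forall x, E x -> m' <= x) -> m' <= m).

Definition is_cdf (F : R -> R) : Prop :=
  (forall x y, x <= y -> F x <= F y) /\
  (forall x eps, 0 < eps -> exists d, 0 < d /\ forall y, x <= y < x + d -> Rabs (F y - F x) < eps) /\
  (forall eps, 0 < eps -> exists X, forall x, x <= X -> Rabs (F x) < eps) /\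
  lim_infty F 1.

Definition slowly_varying (ell : R -> R) : Prop :=
  eventually_R (fun x => 0 < ell x) /\
  forall lam : R, 0 < lam -> lim_infty (fun x => ell (lam * x) / ell x) 1.

(* K_rho(lam) = int_1^lam u^(rho-1) du, written in closed form *)
Definition K (rho lam : R) : R :=
  if Req_EM_T rho 0 then ln lam else (Rpower lam rho - 1) / rho.

(* Assumption (A.2): log(ell(lam x)/ell(x)) ~ b(x) K_rho(lam), uniformly locally
   on lam >= 1, read as: log(ell(lam x)/ell(x)) / b(x) -> K_rho(lam) uniformly
   for lam in every compact [1, Lam]. *)
Definition second_order (ell b : R -> R) (rho : R) : Prop :=
  forall Lam eps : R, 1 <= Lam -> 0 < eps ->
    eventually_R (fun x => forall lam, 1 <= lam <= Lam ->
      Rabs (ln (ell (lam * x) / ell x) / b x - K rho lam) < eps).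

Definition improper_int0 (f : R -> R) (l : R) : Prop :=
  forall eps : R, 0 < eps ->
    eventually_R (fun A => exists pr : Riemann_integrable f 0 A, Rabs (RiemannInt pr - l) < eps).

Inductive ext : Type := Fin (r : R) | PInf.

Definition ext_lt_R (a : ext) (t : R) : Prop :=
  match a with Fin r => r < t | PInf => False end.
Definition R_lt_ext (t : R) (a : ext) : Prop :=
  match a with Fin r => t < r | PInf => True end.

Definition seq_lim_ext (u : nat -> R) (a : ext) : Prop :=
  match a with
  | Fin l => Un_cv u l
  | PInf => forall M : R, eventually_N (fun n => M <= u n)
  end.

Definition fun_lim_ext (f : R -> R) (a : ext) : Prop :=
  match a with
  | Fin l => lim_infty f l
  | PInf => forall M : R, eventually_R (fun x => M <= f x)
  end.

Definition Ln (k : nat -> nat) (n : nat) : R := ln (INR n / INR (k n)).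

Definition T1 (mu0 : R -> R) (k : nat -> nat) (n : nat) : R := mu0 (Ln k n).

Definition T2 (k : nat -> nat) (n : nat) : R :=
  / INR (k n) *
  sum_f_R0 (fun j => ln (1 - ln (INR (S j) / INR (k n)) / Ln k n)) (pred (k n)).

Definition T3 (k : nat -> nat) (n : nat) : R := / Ln k n.

(* a_n^{(i)} = mu0(log(n/k_n)) / T_n^{(i)} - 1, given the value T of T_n^{(i)} *)
Definition a_n (mu0 : R -> R) (k : nat -> nat) (n : nat) (T : R) : R :=
  mu0 (Ln k n) / T - 1.

Definition AMSE (mu0 b : R -> R) (theta : R) (k : nat -> nat) (n : nat) (T : R) : R :=
  (theta * a_n mu0 k n T + b (Ln k n)) ^ 2 + theta ^ 2 / INR (k n).

Definition AMSE1 mu0 b theta k n := AMSE mu0 b theta k n (T1 mu0 k n).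
Definition AMSE2 mu0 b theta k n := AMSE mu0 b theta k n (T2 k n).
Definition AMSE3 mu0 b theta k n := AMSE mu0 b theta k n (T3 k n).

(* Main.v *)
Require Import Defs.
From Stdlib Require Import Reals Lra Lia Psatz.
Open Scope R_scope.

Lemma dlim_val f x l l' : derivable_pt_lim f x l -> l = l' -> derivable_pt_lim f x l'.
Proof. intros; subst; auto. Qed.
Lemma d_expneg x : derivable_pt_lim (fun y => exp (-y)) x (- exp (-x)).
Proof. replace (- exp (-x)) with (exp (-x) * (-1)) by ring.
 apply (derivable_pt_lim_comp (fun y => -y) exp).
 apply (derivable_pt_lim_opp (fun y => y) x 1). apply derivable_pt_lim_id.
 apply derivable_pt_lim_exp. Qed.
Lemma d_ln1p c : -1 < c -> derivable_pt_lim (fun y => ln (1+y)) c (/(1+c)).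
Proof. intros Hc. replace (/(1+c)) with (/(1+c) * (0+1)) by ring.
 apply (derivable_pt_lim_comp (fun y => 1+y) ln).
 - apply (derivable_pt_lim_plus (fun _ => 1) (fun y => y)).
   apply derivable_pt_lim_const. apply derivable_pt_lim_id.
 - apply derivable_pt_lim_ln. lra. Qed.
Ltac dl := first
 [ apply derivable_pt_lim_const
 | apply derivable_pt_lim_id
 | apply d_expneg
 | eapply derivable_pt_lim_plus; dl
 | eapply derivable_pt_lim_minus; dl
 | eapply derivable_pt_lim_mult; dl
 | eapply derivable_pt_lim_opp; dl ].

Lemma ln_le_sub1 y : 0 < y -> ln y <= y - 1.
Proof. intros Hy. pose proof (exp_ineq1_le (ln y)) as H. rewrite exp_ln in H; lra. Qed.

Lemma ln_ge_1minv y : 0 < y -> 1 - / y <= ln y.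
Proof. intros Hy. pose proof (ln_le_sub1 (/y) (Rinv_0_lt_compat _ Hy)) as H.
 rewrite ln_Rinv in H by lra. lra. Qed.

Lemma incr_deriv f f' a b : a <= b -> (forall c, a <= c <= b -> derivable_pt_lim f c (f' c)) ->
  (forall c, a < c < b -> 0 <= f' c) -> f a <= f b.
Proof. intros Hab Hd Hp. destruct (Rle_lt_or_eq_dec _ _ Hab) as [H|H].
 - destruct (MVT_cor2 f f' a b H Hd) as [c [Hc Hc2]]. specialize (Hp c Hc2). nra.
 - subst; lra. Qed.

Lemma ln1p_lower y : 0 <= y -> y - y*y/2 <= ln (1+y).
Proof. intros Hy.
 assert (H := incr_deriv (fun y => ln (1+y) - (y - y*y/2)) (fun c => /(1+c) - (1 - c)) 0 y Hy).
 cbv beta in H. rewrite Rplus_0_r, ln_1 in H.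
 assert (0 - (0 - 0*0/2) <= ln (1 + y) - (y - y*y/2)). { apply H.
 - intros c Hc. apply derivable_pt_lim_minus. apply d_ln1p; lra.
   eapply dlim_val. unfold Rdiv. dl. cbv beta. field.
 - intros c Hc. replace (/(1+c) - (1 - c)) with (c*c/(1+c)) by (field; lra).
   apply Rmult_le_pos; [nra| apply Rlt_le, Rinv_0_lt_compat; lra]. }
 lra. Qed.

Lemma ln1p_upper y : 0 <= y -> ln (1+y) <= y - y*y/2 + y*y*y/3.
Proof. intros Hy.
 assert (H := incr_deriv (fun y => (y - y*y/2 + y*y*y/3) - ln (1+y)) (fun c => (1 - c + c*c) - /(1+c)) 0 y Hy).
 cbv beta in H. rewrite Rplus_0_r, ln_1 in H.
 assert (0 - 0*0/2 + 0*0*0/3 - 0 <= (y - y*y/2 + y*y*y/3) - ln (1 + y)). { apply H.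
 - intros c Hc. apply derivable_pt_lim_minus. 
   eapply dlim_val. unfold Rdiv. dl. cbv beta. field. apply d_ln1p; lra.
 - intros c Hc. replace ((1 - c + c*c) - /(1+c)) with (c*c*c/(1+c)) by (field; lra).
   apply Rmult_le_pos; [nra| apply Rlt_le, Rinv_0_lt_compat; lra]. }
 lra. Qed.
Lemma div_nonneg a b : 0 <= a -> 0 < b -> 0 <= a / b.
Proof. intros. unfold Rdiv. apply Rmult_le_pos; auto. left; apply Rinv_0_lt_compat; auto. Qed.

Lemma FTC_gen h G a b (pr : Riemann_integrable h a b) : a <= b ->
  (forall x, a<=x<=b -> derivable_pt_lim G x (h x)) ->
  (forall x, a<=x<=b -> continuity_pt h x) -> RiemannInt pr = G b - G a.
Proof. intros Hab Hd Hc.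
 rewrite (RiemannInt_P20 Hab (FTC_P1 Hab Hc) pr).
 assert (H1 := RiemannInt_P29 Hab Hc).
 assert (H2 : antiderivative h G a b).
 { split; auto. intros x Hx. exists (exist _ (h x) (Hd x Hx)). reflexivity. }
 destruct (antiderivative_Ucte _ _ _ _ _ H1 H2) as [C HC].
 rewrite (HC b), (HC a); [ring| lra | lra]. Qed.

Lemma int_le f h G a b (pr : Riemann_integrable f a b) : a <= b ->
  (forall x, a<=x<=b -> derivable_pt_lim G x (h x)) ->
  (forall x, a<=x<=b -> continuity_pt h x) ->
  (forall x, a < x < b -> f x <= h x) -> RiemannInt pr <= G b - G a.
Proof. intros Hab Hd Hc Hle.
 pose (prh := continuity_implies_RiemannInt Hab Hc).
 rewrite <- (FTC_gen h G a b prh) by auto. apply RiemannInt_P19; auto. Qed.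

Lemma int_ge f h G a b (pr : Riemann_integrable f a b) : a <= b ->
  (forall x, a<=x<=b -> derivable_pt_lim G x (h x)) ->
  (forall x, a<=x<=b -> continuity_pt h x) ->
  (forall x, a < x < b -> h x <= f x) -> G b - G a <= RiemannInt pr.
Proof. intros Hab Hd Hc Hle.
 pose (prh := continuity_implies_RiemannInt Hab Hc).
 rewrite <- (FTC_gen h G a b prh) by auto. apply RiemannInt_P19; auto. Qed.

Definition fL (t : R) := fun x => ln (1 + x / t) * exp (- x).

Lemma mu0_upper t m : 1 <= t -> improper_int0 (fL t) m -> m <= 1/t - 1/(t*t) + 2/(t*t*t).
Proof. intros Ht Hm.
 set (P := fun x => x/t - x*x/(2*t*t) + x*x*x/(3*t*t*t) + (1/t - x/(t*t) + x*x/(t*t*t))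
     + (-1/(t*t) + 2*x/(t*t*t)) + 2/(t*t*t)).
 assert (Hb : forall A (pr : Riemann_integrable (fL t) 0 A), 0 <= A ->
   RiemannInt pr <= 1/t - 1/(t*t) + 2/(t*t*t)).
 { intros A pr HA.
   eapply Rle_trans.
   - apply (int_le _ (fun x => (x/t - x*x/(2*t*t) + x*x*x/(3*t*t*t)) * exp (-x))
             (fun x => - (P x * exp (-x))) 0 A pr HA).
     + intros x _. eapply dlim_val. unfold P, Rdiv. dl. cbv beta. field. lra.
     + intros x _. reg.
     + intros x Hx. unfold fL. apply Rmult_le_compat_r. left; apply exp_pos.
       assert (H := ln1p_upper (x/t)). 
       assert (0 <= x/t) by (apply div_nonneg; lra).
       eapply Rle_trans. apply H; auto. right. field. lra.
   - assert (0 <= P A).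
     { unfold P. assert (t*t*t > 0) by (apply Rmult_lt_0_compat; nra).
       replace (A / t - A * A / (2 * t * t) + A * A * A / (3 * t * t * t) +
        (1 / t - A / (t * t) + A * A / (t * t * t)) + (-1 / (t * t) + 2 * A / (t * t * t)) + 2 / (t * t * t))
       with ((A*(t*t/2 - A*t/2 + A*A/3) + A*(t*t/2 - t + 2) + (t*t - t + 2) + A*A) / (t*t*t)) by (field; lra).
       apply div_nonneg; [|lra].
       assert (0 <= t*t/2 - A*t/2 + A*A/3) by nra.
       assert (0 <= t*t/2 - t + 2) by nra. nra. }
     assert (P 0 = 1/t - 1/(t*t) + 2/(t*t*t)) by (unfold P; field; lra).
     rewrite Ropp_0, exp_0. assert (0 < exp (-A)) by apply exp_pos. nra. }
 destruct (Rle_or_lt m (1/t - 1/(t*t) + 2/(t*t*t))) as [|Hlt]; auto.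
 destruct (Hm (m - (1/t - 1/(t*t) + 2/(t*t*t)))) as [X HX]; [lra|].
 destruct (HX (Rmax X 0) (Rmax_l _ _)) as [pr Hpr].
 specialize (Hb _ pr (Rmax_r _ _)). apply Rabs_def2 in Hpr. lra. Qed.

Lemma mu0_lower t m : 1 <= t -> improper_int0 (fL t) m -> 1/t - 1/(t*t) <= m.
Proof. intros Ht Hm.
 set (P := fun x => x/t - x*x/(2*t*t) + (1/t - x/(t*t)) - 1/(t*t)).
 assert (Hb : forall A (pr : Riemann_integrable (fL t) 0 A), 2*t+2 <= A ->
   1/t - 1/(t*t) <= RiemannInt pr).
 { intros A pr HA.
   eapply Rle_trans; cycle 1.
   - apply (int_ge _ (fun x => (x/t - x*x/(2*t*t)) * exp (-x))
             (fun x => - (P x * exp (-x))) 0 A pr); [lra| | |].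
     + intros x _. eapply dlim_val. unfold P, Rdiv. dl. cbv beta. field. lra.
     + intros x _. reg.
     + intros x Hx. unfold fL. apply Rmult_le_compat_r. left; apply exp_pos.
       assert (H := ln1p_lower (x/t)). 
       assert (0 <= x/t) by (apply div_nonneg; lra).
       eapply Rle_trans; [|apply H; auto]. right. field. lra.
   - assert (P A <= 0).
     { unfold P. 
       replace (A / t - A * A / (2 * t * t) + (1 / t - A / (t * t)) - 1 / (t * t))
       with ((A*(t - A/2) + t - A - 1) / (t*t)) by (field; lra).
       assert (A*(t - A/2) <= -A) by nra.
       assert (0 < /(t*t)) by (apply Rinv_0_lt_compat; nra). unfold Rdiv. nra. }
     assert (P 0 = 1/t - 1/(t*t)) by (unfold P; field; lra).
     rewrite Ropp_0, exp_0. assert (0 < exp (-A)) by apply exp_pos. nra. }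
 destruct (Rle_or_lt (1/t - 1/(t*t)) m) as [|Hlt]; auto.
 destruct (Hm ((1/t - 1/(t*t)) - m)) as [X HX]; [lra|].
 destruct (HX (Rmax X (2*t+2)) (Rmax_l _ _)) as [pr Hpr].
 specialize (Hb _ pr (Rmax_r _ _)). apply Rabs_def2 in Hpr. lra. Qed.

Lemma ln_div' x y : 0 < x -> 0 < y -> ln (x / y) = ln x - ln y.
Proof. intros. unfold Rdiv. rewrite ln_mult, ln_Rinv; auto; try ring.
 apply Rinv_0_lt_compat; auto. Qed.

Lemma ln_le' x y : 0 < x -> x <= y -> ln x <= ln y.
Proof. intros Hx Hxy. destruct Hxy. left; apply ln_increasing; auto. subst; lra. Qed.

Lemma g_up t a x : 0 < t -> 0 <= a <= x -> ln (1 + x/t) <= ln (1 + a/t) + (x-a)/t.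
Proof. intros Ht Ha.
 assert (0 <= a/t) by (apply div_nonneg; lra). assert (0 <= x/t) by (apply div_nonneg; lra).
 assert (Hq := ln_le_sub1 ((1+x/t)/(1+a/t))). rewrite ln_div' in Hq by lra.
 assert ((1 + x / t) / (1 + a / t) - 1 = (x-a)/(t+a)) by (field; lra).
 assert ((x-a)/(t+a) <= (x-a)/t).
 { unfold Rdiv. apply Rmult_le_compat_l. lra. apply Rinv_le_contravar; lra. }
 assert (0 < (1 + x / t) / (1 + a / t)) by (apply Rdiv_lt_0_compat; lra). lra. Qed.

Lemma g_lo t a x B : 0 < t -> 0 <= a <= x -> x <= B -> ln (1 + a/t) + (x-a)/(t+B) <= ln (1 + x/t).
Proof. intros Ht Ha HB.
 assert (0 <= a/t) by (apply div_nonneg; lra). assert (0 <= x/t) by (apply div_nonneg; lra).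
 assert (Hq := ln_ge_1minv ((1+x/t)/(1+a/t))). rewrite ln_div' in Hq by lra.
 assert (1 - / ((1 + x / t) / (1 + a / t)) = (x-a)/(t+x)) by (field; lra).
 assert ((x-a)/(t+B) <= (x-a)/(t+x)).
 { unfold Rdiv. apply Rmult_le_compat_l. lra. apply Rinv_le_contravar; lra. }
 assert (0 < (1 + x / t) / (1 + a / t)) by (apply Rdiv_lt_0_compat; lra). lra. Qed.

Lemma piece_le f a b v c (pr : Riemann_integrable f a b) : a <= b ->
  (forall x, a < x < b -> f x <= (v + c*(x-a))*exp(-x)) ->
  RiemannInt pr <= v*(exp(-a) - exp(-b)) + c*(exp(-a) - exp(-b) - (b-a)*exp(-b)).
Proof. intros Hab Hf.
 eapply Rle_trans.
 apply (int_le f (fun x => (v + c*(x-a))*exp(-x)) (fun x => - ((v + c*(x-a) + c)*exp(-x))) a b pr Hab).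
 - intros x _. eapply dlim_val. dl. cbv beta. ring.
 - intros x _. reg.
 - auto.
 - right. ring. Qed.

Lemma piece_ge f a b v c (pr : Riemann_integrable f a b) : a <= b ->
  (forall x, a < x < b -> (v + c*(x-a))*exp(-x) <= f x) ->
  v*(exp(-a) - exp(-b)) + c*(exp(-a) - exp(-b) - (b-a)*exp(-b)) <= RiemannInt pr.
Proof. intros Hab Hf.
 eapply Rle_trans; cycle 1.
 apply (int_ge f (fun x => (v + c*(x-a))*exp(-x)) (fun x => - ((v + c*(x-a) + c)*exp(-x))) a b pr Hab).
 - intros x _. eapply dlim_val. dl. cbv beta. ring.
 - intros x _. reg.
 - auto.
 - right. ring. Qed.

Definition zz (kk : nat) (j : nat) : R := - ln (INR (S j) / INR kk).

Lemma INR_pos1 n : (1 <= n)%nat -> 0 < INR n.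
Proof. intros. apply lt_0_INR. lia. Qed.

Lemma zz_exp kk j : (1 <= kk)%nat -> exp (- zz kk j) = INR (S j) / INR kk.
Proof. intros. unfold zz. rewrite Ropp_involutive, exp_ln. auto.
 apply Rdiv_lt_0_compat; apply INR_pos1; lia. Qed.

Lemma zz_nonneg kk j : (j < kk)%nat -> 0 <= zz kk j.
Proof. intros. unfold zz. assert (0 < INR kk) by (apply INR_pos1; lia).
 assert (INR (S j) <= INR kk) by (apply le_INR; lia).
 assert (0 < INR (S j)) by (apply INR_pos1; lia).
 assert (Hl : ln (INR (S j) / INR kk) <= ln 1).
 { apply ln_le'. apply Rdiv_lt_0_compat; lra. 
   apply (Rmult_le_reg_r (INR kk)); auto. unfold Rdiv. rewrite Rmult_assoc, Rinv_l; lra. }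
 rewrite ln_1 in Hl. lra. Qed.

Lemma zz_mono kk i j : (1 <= kk)%nat -> (i <= j)%nat -> zz kk j <= zz kk i.
Proof. intros. unfold zz. apply Ropp_le_contravar. apply ln_le'.
 apply Rdiv_lt_0_compat; apply INR_pos1; lia.
 unfold Rdiv. apply Rmult_le_compat_r. left; apply Rinv_0_lt_compat, INR_pos1; lia.
 apply le_INR; lia. Qed.

Lemma zz_0 kk : (1 <= kk)%nat -> zz kk 0 = ln (INR kk).
Proof. intros. unfold zz. simpl INR. unfold Rdiv. rewrite Rmult_1_l, ln_Rinv. ring.
 apply INR_pos1; auto. Qed.

Lemma zz_last kk : (1 <= kk)%nat -> zz kk (pred kk) = 0.
Proof. intros. unfold zz. replace (S (pred kk)) with kk by lia.
 unfold Rdiv. rewrite Rinv_r, ln_1. ring. apply not_0_INR; lia. Qed.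

Definition gsum t kk m := sum_f_R0 (fun j => ln (1 + zz kk j / t)) m.

Lemma up_ind t kk A : 0 < t -> (1 <= kk)%nat -> ln (INR kk) <= A -> forall m, (m < kk)%nat ->
  forall pr : Riemann_integrable (fL t) (zz kk m) A,
  RiemannInt pr <= / INR kk * gsum t kk m
     + / t * ((1 + zz kk m) * exp (- zz kk m) - / INR kk * sum_f_R0 (zz kk) m).
Proof. intros Ht Hk HA. assert (Hkp : 0 < INR kk) by (apply INR_pos1; auto).
 induction m as [|m IH]; intros Hm pr.
 - eapply Rle_trans. apply (piece_le _ _ _ (ln (1 + zz kk 0 / t)) (/t) pr).
   + rewrite zz_0; auto.
   + intros x Hx. unfold fL. apply Rmult_le_compat_r. left; apply exp_pos.
     assert (H0 := zz_nonneg kk 0 Hm). assert (H1 := g_up t (zz kk 0) x Ht). 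
     unfold Rdiv in H1 at 3. rewrite Rmult_comm in H1. apply H1; lra.
   + unfold gsum. simpl sum_f_R0. rewrite zz_exp by auto. 
     assert (H0 := zz_nonneg kk 0 Hm). rewrite zz_0 in * by auto.
     assert (0 <= ln (1 + ln (INR kk) / t)).
     { rewrite <- ln_1. apply ln_le'. lra. assert (0 <= ln (INR kk) / t) by (apply div_nonneg; lra). lra. }
     assert (0 < exp (-A)) by apply exp_pos. assert (0 < / t) by (apply Rinv_0_lt_compat; lra).
     assert (0 <= / t * ((A - ln (INR kk)) * exp (- A))) by (apply Rmult_le_pos; nra).
     simpl INR. unfold Rdiv. nra.
 - assert (Hab : zz kk (S m) <= zz kk m) by (apply zz_mono; lia).
   assert (HbA : zz kk m <= A). { rewrite <- (zz_0 kk Hk) in HA. eapply Rle_trans; [|apply HA]. apply zz_mono; lia. }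
   pose (pr1 := RiemannInt_P22 pr (conj Hab HbA)).
   pose (pr2 := RiemannInt_P23 pr (conj Hab HbA)).
   rewrite <- (RiemannInt_P26 pr1 pr2 pr).
   assert (H2 := IH ltac:(lia) pr2).
   assert (Ha0 : 0 <= zz kk (S m)) by (apply zz_nonneg; lia).
   assert (H1' : RiemannInt pr1 <= ln (1 + zz kk (S m) / t) * (exp (- zz kk (S m)) - exp (- zz kk m)) +
     / t * (exp (- zz kk (S m)) - exp (- zz kk m) - (zz kk m - zz kk (S m)) * exp (- zz kk m))).
   { apply piece_le; auto. intros x Hx. unfold fL. apply Rmult_le_compat_r. left; apply exp_pos.
     assert (H3 := g_up t (zz kk (S m)) x Ht). unfold Rdiv in H3 at 3. rewrite Rmult_comm in H3. apply H3; lra. }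
   unfold gsum in *. simpl sum_f_R0. rewrite !zz_exp in * by auto.
   eapply Rle_trans. 
   apply Rplus_le_compat; [exact H1' | exact H2].
   right. rewrite !S_INR. field. lra.
Qed.

Lemma lo_ind t kk A : 0 < t -> (1 <= kk)%nat -> ln (INR kk) <= A -> forall m, (m < kk)%nat ->
  forall pr : Riemann_integrable (fL t) (zz kk m) A,
  / INR kk * gsum t kk m - ln (1 + zz kk 0 / t) * exp (-A)
   + / (t + ln (INR kk)) * ((1 + zz kk m) * exp (- zz kk m) - / INR kk - / INR kk * sum_f_R0 (zz kk) m)
  <= RiemannInt pr.
Proof. intros Ht Hk HA. assert (Hkp : 0 < INR kk) by (apply INR_pos1; auto).
 assert (Hlk : 0 <= ln (INR kk)) by (rewrite <- (zz_0 kk Hk); apply zz_nonneg; lia).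
 induction m as [|m IH]; intros Hm pr.
 - eapply Rle_trans; cycle 1. apply (piece_ge _ _ _ (ln (1 + zz kk 0 / t)) 0 pr).
   + rewrite zz_0; auto.
   + intros x Hx. unfold fL. apply Rmult_le_compat_r. left; apply exp_pos.
     assert (H0 := zz_nonneg kk 0 Hm). assert (H1 := g_lo t (zz kk 0) x x Ht).
     assert (0 <= (x - zz kk 0) / (t + x)) by (apply div_nonneg; lra).
     assert (H2 : ln (1 + zz kk 0 / t) + (x - zz kk 0) / (t + x) <= ln (1 + x / t)) by (apply H1; lra).
     lra.
   + unfold gsum. simpl sum_f_R0. rewrite zz_exp by auto. 
     right. simpl INR. field. lra.
 - assert (Hab : zz kk (S m) <= zz kk m) by (apply zz_mono; lia).
   assert (Hb0 : zz kk m <= ln (INR kk)) by (rewrite <- (zz_0 kk Hk); apply zz_mono; lia).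
   assert (HbA : zz kk m <= A) by lra.
   pose (pr1 := RiemannInt_P22 pr (conj Hab HbA)).
   pose (pr2 := RiemannInt_P23 pr (conj Hab HbA)).
   rewrite <- (RiemannInt_P26 pr1 pr2 pr).
   assert (H2 := IH ltac:(lia) pr2).
   assert (Ha0 : 0 <= zz kk (S m)) by (apply zz_nonneg; lia).
   assert (H1' : ln (1 + zz kk (S m) / t) * (exp (- zz kk (S m)) - exp (- zz kk m)) +
     / (t + ln (INR kk)) * (exp (- zz kk (S m)) - exp (- zz kk m) - (zz kk m - zz kk (S m)) * exp (- zz kk m))
      <= RiemannInt pr1).
   { apply piece_ge; auto. intros x Hx. unfold fL. apply Rmult_le_compat_r. left; apply exp_pos.
     assert (H3 := g_lo t (zz kk (S m)) x (ln (INR kk)) Ht).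
     assert (H4 : ln (1 + zz kk (S m) / t) + (x - zz kk (S m)) / (t + ln (INR kk)) <= ln (1 + x / t)) by (apply H3; lra).
     unfold Rdiv in H4 at 2. rewrite (Rmult_comm (x - _)) in H4. exact H4. }
   unfold gsum in *. simpl sum_f_R0. rewrite !zz_exp in * by auto.
   eapply Rle_trans; cycle 1.
   apply Rplus_le_compat; [exact H1' | exact H2].
   right. rewrite !S_INR. field. lra.
Qed.

Lemma le_eps a b : (forall eps, 0 < eps -> a <= b + eps) -> a <= b.
Proof. intros H. destruct (Rle_or_lt a b); auto. specialize (H ((a-b)/2)). lra. Qed.

Lemma T2_upper t kk m0 : 0 < t -> (1 <= kk)%nat -> improper_int0 (fL t) m0 ->
  m0 <= /INR kk * gsum t kk (pred kk) + /t * (1 - /INR kk * sum_f_R0 (zz kk) (pred kk)).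
Proof. intros Ht Hk Hm. apply le_eps. intros eps Heps.
 destruct (Hm eps Heps) as [X HX].
 destruct (HX (Rmax X (ln (INR kk))) (Rmax_l _ _)) as [pr Hpr].
 assert (H := up_ind t kk (Rmax X (ln (INR kk))) Ht Hk (Rmax_r _ _) (pred kk) ltac:(lia)).
 rewrite (zz_last kk Hk) in H. specialize (H pr). rewrite Ropp_0, exp_0 in H.
 apply Rabs_def2 in Hpr. lra. Qed.

Lemma T2_lower t kk m0 : 0 < t -> (1 <= kk)%nat -> improper_int0 (fL t) m0 ->
  /INR kk * gsum t kk (pred kk) + /(t + ln (INR kk)) * (1 - /INR kk - /INR kk * sum_f_R0 (zz kk) (pred kk)) <= m0.
Proof. intros Ht Hk Hm. apply le_eps. intros eps Heps.
 destruct (Hm (eps/2)) as [X HX]; [lra|].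
 set (g0 := ln (1 + zz kk 0 / t)).
 assert (Hg0 : 0 <= g0).
 { unfold g0. rewrite <- ln_1. apply ln_le'. lra.
   assert (0 <= zz kk 0 / t) by (apply div_nonneg; [apply zz_nonneg; lia | lra]). lra. }
 set (A := Rmax (Rmax X (ln (INR kk))) (2 * g0 / eps)).
 assert (HA1 : X <= A) by (unfold A; eapply Rle_trans; [apply Rmax_l|apply Rmax_l]).
 assert (HA2 : ln (INR kk) <= A) by (unfold A; eapply Rle_trans; [apply Rmax_r|apply Rmax_l]).
 assert (HA3 : 2 * g0 / eps <= A) by (unfold A; apply Rmax_r).
 destruct (HX A HA1) as [pr Hpr].
 assert (H := lo_ind t kk A Ht Hk HA2 (pred kk) ltac:(lia)).
 rewrite (zz_last kk Hk) in H. specialize (H pr). rewrite Ropp_0, exp_0 in H.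
 fold g0 in H.
 assert (Hexp : g0 * exp (- A) <= eps / 2).
 { rewrite exp_Ropp. assert (HeA : 1 + A <= exp A) by apply exp_ineq1_le.
   assert (0 < exp A) by apply exp_pos.
   assert (0 <= A). { eapply Rle_trans; [|apply HA2]. rewrite <- (zz_0 kk Hk). apply zz_nonneg; lia. }
   apply (Rmult_le_reg_r (exp A)); auto. rewrite Rmult_assoc, Rinv_l by lra.
   assert (2 * g0 <= A * eps).
   { apply (Rmult_le_compat_r eps) in HA3; [|lra]. unfold Rdiv in HA3. 
     rewrite Rmult_assoc, Rinv_l, Rmult_1_r in HA3 by lra. lra. }
   nra. }
 apply Rabs_def2 in Hpr. lra. Qed.

Lemma stir_step q : 1 <= q -> Rabs (1 - (q + /2) * ln (1 + /q)) <= /(2*q) - /(2*(q+1)).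
Proof. intros Hq. set (y := /q).
 assert (Hy : 0 < y) by (apply Rinv_0_lt_compat; lra).
 assert (Hqy : q * y = 1) by (unfold y; field; lra).
 assert (Hy1 : y <= 1). { unfold y. rewrite <- Rinv_1. apply Rinv_le_contravar; lra. }
 assert (L1 := ln1p_lower y ltac:(lra)). assert (L2 := ln1p_upper y ltac:(lra)).
 set (Lg := ln (1 + y)) in *.
 replace (/(2*q) - /(2*(q+1))) with (y*y/(2*(1+y))) by (unfold y; field; lra).
 assert (E : (q + /2) * Lg = (1 + y/2) * (Lg / y)) by (unfold y; field; lra).
 assert (B1 : 1 - y/2 <= Lg / y).
 { apply (Rmult_le_reg_r y); auto. unfold Rdiv. rewrite Rmult_assoc, Rinv_l by lra. nra. }
 assert (B2 : Lg / y <= 1 - y/2 + y*y/3).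
 { apply (Rmult_le_reg_r y); auto. unfold Rdiv. rewrite Rmult_assoc, Rinv_l by lra. nra. }
 rewrite E. assert (0 < 2*(1+y)) by lra.
 assert (y*y/4 <= y*y/(2*(1+y))).
 { unfold Rdiv. apply Rmult_le_compat_l. nra. apply Rinv_le_contravar; lra. }
 apply Rabs_le. split; nra. Qed.

Definition Lsum p := sum_f_R0 (fun j => ln (INR (S j))) p.
Definition sp p := Lsum p - (INR (S p) + /2) * ln (INR (S p)) + INR (S p).

Lemma sp_bound p : Rabs (sp p - 1) <= /2 - /(2 * INR (S p)).
Proof. induction p as [|p IH].
 - unfold sp, Lsum. simpl. rewrite ln_1.
   replace (0 - (1 + / 2) * 0 + 1 - 1) with 0 by ring. rewrite Rabs_R0. replace (/ 2 - / (2 * 1)) with 0 by field. lra.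
 - set (q := INR (S p)).
   assert (Hq : 1 <= q) by (unfold q; rewrite S_INR; assert (0 <= INR p) by apply pos_INR; lra).
   assert (Hs : sp (S p) = sp p + (1 - (q + /2) * ln (1 + /q))).
   { unfold sp, Lsum. rewrite tech5. fold q. rewrite (S_INR (S p)). fold q.
     replace (1 + /q) with ((q+1)/q) by (field; lra). rewrite ln_div' by lra. field. }
   rewrite Hs. assert (St := stir_step q Hq).
   rewrite (S_INR (S p)). fold q.
   replace (sp p + (1 - (q + / 2) * ln (1 + / q)) - 1) with ((sp p - 1) + (1 - (q + / 2) * ln (1 + / q))) by ring.
   eapply Rle_trans. apply Rabs_triang. fold q in IH. lra. Qed.

Lemma zsum_eq kk m : (1 <= kk)%nat -> sum_f_R0 (zz kk) m = INR (S m) * ln (INR kk) - Lsum m.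
Proof. intros Hk. assert (0 < INR kk) by (apply INR_pos1; auto).
 induction m as [|m IH].
 - unfold Lsum, zz. simpl. rewrite ln_div' by lra. simpl. ring.
 - unfold Lsum in *. rewrite !tech5, IH. unfold zz.
   rewrite ln_div'; [| apply INR_pos1; lia | lra]. rewrite (S_INR (S m)). ring. Qed.

Lemma kD_bound kk : (1 <= kk)%nat ->
  Rabs (INR kk - sum_f_R0 (zz kk) (pred kk) - ln (INR kk) / 2 - 1) <= /2.
Proof. intros Hk. rewrite zsum_eq by auto. replace (S (pred kk)) with kk by lia.
 assert (H := sp_bound (pred kk)). unfold sp in H. replace (S (pred kk)) with kk in H by lia.
 assert (0 < /(2 * INR kk)) by (apply Rinv_0_lt_compat; assert (0 < INR kk) by (apply INR_pos1; auto); lra).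
 replace (INR kk - (INR kk * ln (INR kk) - Lsum (pred kk)) - ln (INR kk) / 2 - 1)
   with (Lsum (pred kk) - (INR kk + / 2) * ln (INR kk) + INR kk - 1) by field.
 lra. Qed.

Lemma ev_and (P Q : nat -> Prop) : eventually_N P -> eventually_N Q -> eventually_N (fun n => P n /\ Q n).
Proof. intros [N1 H1] [N2 H2]. exists (max N1 N2). intros n Hn. split; [apply H1|apply H2]; lia. Qed.

Lemma ev_mono (P Q : nat -> Prop) : (forall n, P n -> Q n) -> eventually_N P -> eventually_N Q.
Proof. intros H [N HN]. exists N. intros n Hn. auto. Qed.

Lemma ev_ge (N : nat) : eventually_N (fun n => (N <= n)%nat).
Proof. exists N. auto. Qed.

Lemma cv_ev (u : nat -> R) l eps : Un_cv u l -> 0 < eps -> eventually_N (fun n => Rabs (u n - l) < eps).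
Proof. intros H He. destruct (H eps He) as [N HN]. exists N. intros n Hn. apply HN. lia. Qed.

Lemma ev_cv (u : nat -> R) l : (forall eps, 0 < eps -> eventually_N (fun n => Rabs (u n - l) < eps)) -> Un_cv u l.
Proof. intros H eps He. destruct (H eps He) as [N HN]. exists N. intros n Hn. apply HN. lia. Qed.

Lemma cv_ext (u v : nat -> R) l : Un_cv u l -> eventually_N (fun n => u n = v n) -> Un_cv v l.
Proof. intros H He. apply ev_cv. intros eps Heps.
 apply (ev_mono (fun n => Rabs (u n - l) < eps /\ u n = v n)).
 intros n [H1 H2]. rewrite <- H2; auto. apply ev_and; auto. apply cv_ev; auto. Qed.

Lemma squeeze (lo u hi : nat -> R) l : eventually_N (fun n => lo n <= u n <= hi n) ->
  Un_cv lo l -> Un_cv hi l -> Un_cv u l.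
Proof. intros Hb Hl Hh. apply ev_cv. intros eps Heps.
 apply (ev_mono (fun n => (lo n <= u n <= hi n) /\ (Rabs (lo n - l) < eps /\ Rabs (hi n - l) < eps))).
 intros n [H1 [H2 H3]]. apply Rabs_def2 in H2. apply Rabs_def2 in H3. apply Rabs_def1; lra.
 apply ev_and; auto. apply ev_and; apply cv_ev; auto. Qed.

Lemma cv_const c : Un_cv (fun _ => c) c.
Proof. intros eps He. exists 0%nat. intros. unfold Rdist. rewrite Rminus_diag, Rabs_R0. lra. Qed.

Lemma cv_gt (u : nat -> R) l c : Un_cv u l -> c < l -> eventually_N (fun n => c < u n).
Proof. intros H Hc. apply (ev_mono (fun n => Rabs (u n - l) < l - c)).
 intros n Hn. apply Rabs_def2 in Hn. lra. apply cv_ev; auto; lra. Qed.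

Lemma cv_lt (u : nat -> R) l c : Un_cv u l -> l < c -> eventually_N (fun n => u n < c).
Proof. intros H Hc. apply (ev_mono (fun n => Rabs (u n - l) < c - l)).
 intros n Hn. apply Rabs_def2 in Hn. lra. apply cv_ev; auto; lra. Qed.

Lemma cv_inv (u : nat -> R) l : Un_cv u l -> l <> 0 -> Un_cv (fun n => / u n) (/ l).
Proof. intros H Hl. apply ev_cv. intros eps Heps.
 assert (Hal : 0 < Rabs l) by (apply Rabs_pos_lt; auto).
 set (e := Rmin (Rabs l / 2) (eps * (Rabs l * Rabs l) / 2)).
 assert (He : 0 < e). { unfold e. apply Rmin_glb_lt. lra. apply Rmult_lt_0_compat; [|lra]. apply Rmult_lt_0_compat; nra. }
 apply (ev_mono (fun n => Rabs (u n - l) < e)); [|apply cv_ev; auto].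
 intros n Hn.
 assert (He1 : e <= Rabs l / 2) by apply Rmin_l. assert (He2 : e <= eps * (Rabs l * Rabs l) / 2) by apply Rmin_r.
 assert (Hun : Rabs l / 2 <= Rabs (u n)).
 { assert (Rabs l <= Rabs (u n) + Rabs (u n - l)).
   { replace l with (u n - (u n - l)) at 1 by ring. eapply Rle_trans. apply Rabs_triang. rewrite Rabs_Ropp. lra. }
   lra. }
 assert (Hu0 : u n <> 0). { intro Z. rewrite Z, Rabs_R0 in Hun. lra. }
 replace (/ u n - / l) with ((l - u n) / (u n * l)) by (field; auto).
 unfold Rdiv. rewrite Rabs_mult, Rabs_inv, Rabs_mult.
 replace (l - u n) with (- (u n - l)) by ring. rewrite Rabs_Ropp.
 assert (0 < Rabs (u n) * Rabs l) by nra.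
 apply (Rmult_lt_reg_r (Rabs (u n) * Rabs l)); auto. rewrite Rmult_assoc, Rinv_l by lra.
 assert (eps * (Rabs l * Rabs l) / 2 <= eps * (Rabs (u n) * Rabs l)) by nra. lra. Qed.

Definition cv_inf (u : nat -> R) := forall M, eventually_N (fun n => M <= u n).

Lemma inf_inv (u : nat -> R) : cv_inf u -> Un_cv (fun n => / u n) 0.
Proof. intros H. apply ev_cv. intros eps Heps.
 apply (ev_mono (fun n => 2 / eps <= u n)); [|apply H].
 intros n Hn. assert (0 < 2/eps) by (apply Rdiv_lt_0_compat; lra).
 rewrite Rminus_0_r, Rabs_right.
 - apply (Rmult_lt_reg_r (u n)); [lra|]. rewrite Rinv_l by lra.
   apply (Rmult_le_compat_l eps) in Hn; [|lra]. unfold Rdiv in Hn. rewrite <- Rmult_assoc, (Rmult_comm eps 2), Rmult_assoc, Rinv_r, Rmult_1_r in Hn by lra. lra.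
 - left. apply Rinv_0_lt_compat. lra. Qed.

Lemma cv_val (u : nat -> R) l l' : Un_cv u l -> l = l' -> Un_cv u l'.
Proof. intros; subst; auto. Qed.


Lemma INR_ge1 n : (1 <= n)%nat -> 1 <= INR n.
Proof. intros. replace 1 with (INR 1) by reflexivity. apply le_INR; auto. Qed.

Lemma lnn_inf (k : nat -> nat) : (forall n, (2<=n)%nat -> (1<=k n)%nat /\ (k n < n)%nat) ->
  cv_inf (fun n => INR (k n)) -> cv_inf (fun n => ln (INR n)).
Proof. intros Hk Hinf M.
 apply (ev_mono (fun n => exp M <= INR (k n) /\ (2 <= n)%nat)); [|apply ev_and; [apply Hinf|apply ev_ge]].
 intros n [H1 H2]. destruct (Hk n H2) as [_ H3]. apply lt_INR in H3.
 rewrite <- (ln_exp M). apply ln_le'. apply exp_pos. lra. Qed.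

Lemma lk_inf (k : nat -> nat) : cv_inf (fun n => INR (k n)) -> cv_inf (fun n => ln (INR (k n))).
Proof. intros Hinf M. apply (ev_mono (fun n => exp M <= INR (k n))); [|apply Hinf].
 intros n H1. rewrite <- (ln_exp M). apply ln_le'. apply exp_pos. lra. Qed.

Lemma Ln_eq (k : nat -> nat) n : (1 <= k n)%nat -> (k n < n)%nat ->
  Ln k n = ln (INR n) - ln (INR (k n)).
Proof. intros. unfold Ln. apply ln_div'. apply lt_0_INR; lia. apply lt_0_INR; lia. Qed.

Lemma lk_nonneg (k : nat -> nat) n : (1 <= k n)%nat -> 0 <= ln (INR (k n)).
Proof. intros. rewrite <- ln_1. apply ln_le'. lra. apply INR_ge1; auto. Qed.

Lemma L_inf (k : nat -> nat) : (forall n, (2<=n)%nat -> (1<=k n)%nat /\ (k n < n)%nat) ->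
  cv_inf (fun n => INR (k n)) -> Un_cv (fun n => ln (INR (k n)) / ln (INR n)) 0 ->
  cv_inf (Ln k).
Proof. intros Hk Hinf Hr M.
 apply (ev_mono (fun n => (2 <= n)%nat /\ (Rmax 1 (2*M) <= ln (INR n) /\
     Rabs (ln (INR (k n)) / ln (INR n) - 0) < /2))).
 - intros n [H1 [H2 H3]]. destruct (Hk n H1) as [Ha Hb]. rewrite Ln_eq by auto.
   assert (Hm1 := Rmax_l 1 (2*M)). assert (Hm2 := Rmax_r 1 (2*M)).
   apply Rabs_def2 in H3. rewrite Rminus_0_r in H3.
   set (l := ln (INR n)) in *. set (lk := ln (INR (k n))) in *.
   assert (lk = (lk / l) * l) by (field; lra).
   assert (lk <= l / 2) by nra. lra.
 - apply ev_and; [apply ev_ge|]. apply ev_and. apply (lnn_inf k Hk Hinf). apply cv_ev; auto; lra. Qed.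

Lemma lkL_cv (k : nat -> nat) : (forall n, (2<=n)%nat -> (1<=k n)%nat /\ (k n < n)%nat) ->
  cv_inf (fun n => INR (k n)) -> Un_cv (fun n => ln (INR (k n)) / ln (INR n)) 0 ->
  Un_cv (fun n => ln (INR (k n)) / Ln k n) 0.
Proof. intros Hk Hinf Hr.
 set (r := fun n => ln (INR (k n)) / ln (INR n)).
 apply (cv_ext (fun n => r n * / (1 - r n))).
 - apply cv_val with (0 * / (1 - 0)). apply CV_mult; auto. apply cv_inv.
   apply (CV_minus (fun _ => 1)); auto. apply cv_const. lra. ring.
 - apply (ev_mono (fun n => (2 <= n)%nat /\ 1 <= ln (INR n))).
   + intros n [H1 H2]. destruct (Hk n H1) as [Ha Hb]. rewrite Ln_eq by auto. unfold r.
     assert (Hn0 := lk_nonneg k n Ha). field. split; try lra.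
     intro Z. apply lt_INR in Hb. assert (0 < INR (k n)) by (apply lt_0_INR; lia).
     assert (ln (INR (k n)) < ln (INR n)) by (apply ln_increasing; lra). lra.
   + apply ev_and; [apply ev_ge|]. apply (lnn_inf k Hk Hinf). Qed.

Lemma lkk_cv (k : nat -> nat) : cv_inf (fun n => INR (k n)) ->
  Un_cv (fun n => ln (INR (k n)) / INR (k n)) 0.
Proof. intros Hinf.
 apply (squeeze (fun _ => 0) _ (fun n => 2 * / sqrt (INR (k n)))).
 - apply (ev_mono (fun n => 1 <= INR (k n))); [|apply Hinf].
   intros n H. set (x := INR (k n)) in *.
   assert (Hs : 0 < sqrt x) by (apply sqrt_lt_R0; lra).
   assert (Hss : sqrt x * sqrt x = x) by (apply sqrt_sqrt; lra).
   assert (Hl : ln x = 2 * ln (sqrt x)) by (rewrite <- Hss at 1; rewrite ln_mult; auto; ring).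
   assert (Hl2 := ln_le_sub1 (sqrt x) Hs).
   assert (0 <= ln x) by (rewrite <- ln_1; apply ln_le'; lra).
   split. apply div_nonneg; lra.
   apply (Rmult_le_reg_r x); [lra|]. unfold Rdiv. rewrite Rmult_assoc, Rinv_l by lra.
   assert (E: 2 * / sqrt x * x = 2 * sqrt x) by (pattern x at 2; rewrite <- Hss; field; lra). rewrite E. nra.
 - apply cv_const.
 - apply cv_val with (2 * 0); [|ring]. apply CV_mult. apply cv_const. apply inf_inv.
   intros M. apply (ev_mono (fun n => M * M <= INR (k n))); [|apply Hinf].
   intros n H. eapply Rle_trans. apply RRle_abs. rewrite <- sqrt_Rsqr_abs. apply sqrt_le_1_alt. unfold Rsqr. lra.
Qed.

Lemma Rabs_le_inv x a : Rabs x <= a -> -a <= x <= a.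
Proof. intros H. assert (H1 := Rle_abs x). assert (H2 := Rle_abs (-x)). rewrite Rabs_Ropp in H2. lra. Qed.

Lemma alg_u L κ ℓ m T Z :
 0 < L -> 1 <= κ -> 0 < ℓ ->
 T + /(L+ℓ) * (1 - /κ - /κ * Z) <= m -> m <= T + /L * (1 - /κ * Z) ->
 Rabs (κ - Z - ℓ/2 - 1) <= /2 ->
 (/2 - /2 * /ℓ) * /(1 + ℓ/L) <= (m - T) * L * κ / ℓ <= /2 + 3/2 * /ℓ.
Proof. intros HL Hk Hl H1 H2 H3. apply Rabs_le_inv in H3.
 assert (A1: (m - T) * (L*κ) <= κ - Z).
 { assert (H : m - T <= /L * (1 - /κ*Z)) by lra. apply (Rmult_le_compat_r (L*κ)) in H; [|nra].
   replace (/L * (1 - /κ*Z) * (L*κ)) with (κ - Z) in H by (field; lra). exact H. }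
 assert (A2: κ - Z - 1 <= (m - T) * ((L+ℓ)*κ)).
 { assert (H : /(L+ℓ) * (1 - /κ - /κ*Z) <= m - T) by lra. apply (Rmult_le_compat_r ((L+ℓ)*κ)) in H; [|nra].
   replace (/(L+ℓ) * (1 - /κ - /κ*Z) * ((L+ℓ)*κ)) with (κ - Z - 1) in H by (field; lra). exact H. }
 split.
 - assert (Hc : 0 < L / ((L+ℓ)*ℓ)) by (apply Rdiv_lt_0_compat; nra).
   replace ((m - T) * L * κ / ℓ) with (((m - T) * ((L+ℓ)*κ)) * (L / ((L+ℓ)*ℓ))) by (field; lra).
   replace ((/2 - /2 * /ℓ) * /(1 + ℓ/L)) with ((ℓ/2 - /2) * (L / ((L+ℓ)*ℓ))) by (field; lra).
   apply Rmult_le_compat_r; lra.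
 - replace ((m - T) * L * κ / ℓ) with (((m - T) * (L*κ)) * /ℓ) by (field; lra).
   replace (/2 + 3/2 * /ℓ) with ((ℓ/2 + 3/2) * /ℓ) by (field; lra).
   apply Rmult_le_compat_r. left; apply Rinv_0_lt_compat; lra. lra. Qed.

Lemma alg_w L κ ℓ m T Z :
 1 <= L -> 1 <= κ -> 1 <= ℓ ->
 T + /(L+ℓ) * (1 - /κ - /κ * Z) <= m -> m <= T + /L * (1 - /κ * Z) ->
 1/L - 1/(L*L) <= m -> m <= 1/L - 1/(L*L) + 2/(L*L*L) ->
 Rabs (κ - Z - ℓ/2 - 1) <= /2 ->
 1 - /L - /2 * (ℓ/κ) - 3/2 * /κ <= T * L <= 1 - /L + 2 * (/L * /L).
Proof. intros HL Hk Hl H1 H2 H4 H5 H3. apply Rabs_le_inv in H3.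
 split.
 - assert (H : m - /L * (1 - /κ*Z) <= T) by lra. apply (Rmult_le_compat_r L) in H; [|lra].
   assert (H6 : 1 - /L <= m * L).
   { apply (Rmult_le_compat_r L) in H4; [|lra]. replace ((1/L - 1/(L*L)) * L) with (1 - /L) in H4 by (field; lra). lra. }
   replace ((m - /L * (1 - /κ*Z)) * L) with (m * L - (κ - Z) * /κ) in H by (field; lra).
   assert ((κ - Z) * /κ <= (ℓ/2 + 3/2) * /κ).
   { apply Rmult_le_compat_r. left; apply Rinv_0_lt_compat; lra. lra. }
   replace ((ℓ/2 + 3/2) * /κ) with (/2 * (ℓ/κ) + 3/2 * /κ) in H0 by (field; lra). lra.
 - assert (H6 : 0 <= /(L+ℓ) * (1 - /κ - /κ*Z)).
   { replace (/(L+ℓ) * (1 - /κ - /κ*Z)) with ((κ - Z - 1) * /((L+ℓ)*κ)) by (field; lra).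
     apply Rmult_le_pos. lra. left; apply Rinv_0_lt_compat; nra. }
   assert (T <= m) by lra.
   apply (Rmult_le_compat_r L) in H5; [|lra].
   replace ((1/L - 1/(L*L) + 2/(L*L*L)) * L) with (1 - /L + 2 * (/L * /L)) in H5 by (field; lra).
   nra. Qed.

Lemma alg_3 L m : 1 <= L -> 1/L - 1/(L*L) <= m -> m <= 1/L - 1/(L*L) + 2/(L*L*L) ->
  -1 <= (m / /L - 1) * L <= -1 + 2 * /L.
Proof. intros HL H1 H2.
 replace ((m / /L - 1) * L) with (m * (L*L) - L) by (field; lra).
 apply (Rmult_le_compat_r (L*L)) in H1; [|nra]. apply (Rmult_le_compat_r (L*L)) in H2; [|nra].
 replace ((1/L - 1/(L*L)) * (L*L)) with (L - 1) in H1 by (field; lra).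
 replace ((1/L - 1/(L*L) + 2/(L*L*L)) * (L*L)) with (L - 1 + 2 * /L) in H2 by (field; lra).
 lra. Qed.

Lemma K2_pos rho : rho <= 0 -> 0 < K rho 2.
Proof. intros Hr. unfold K. destruct (Req_EM_T rho 0).
 - assert (H := ln_lt_2). lra.
 - assert (Hrn : rho < 0) by lra. unfold Rpower.
   assert (exp (rho * ln 2) < 1).
   { rewrite <- exp_0. apply exp_increasing. assert (Hl2 := ln_lt_2). nra. }
   apply Rdiv_neg_neg; lra. Qed.

Lemma K_diff rho mu : rho <= 0 -> 1 <= mu -> exists q,
  K rho (2*mu) - K rho mu = q * K rho 2 /\ 1 + rho*(mu-1) <= q <= 1.
Proof. intros Hr Hmu. unfold K. destruct (Req_EM_T rho 0) as [E|E].
 - exists 1. rewrite ln_mult by lra. split; [ring|]. subst; lra.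
 - exists (Rpower mu rho). split.
   + rewrite <- Rpower_mult_distr by lra. field. auto.
   + unfold Rpower. assert (Hl := ln_le_sub1 mu ltac:(lra)).
     assert (0 <= ln mu) by (rewrite <- ln_1; apply ln_le'; lra).
     split.
     * eapply Rle_trans; [|apply exp_ineq1_le]. nra.
     * rewrite <- exp_0. destruct (Req_dec (rho * ln mu) 0) as [Z|Z]. rewrite Z; lra.
       left. apply exp_increasing. nra. Qed.

Lemma rv_unif ell b rho : rho <= 0 -> slowly_varying ell -> eventually_R (fun x => b x <> 0) ->
  second_order ell b rho ->
  forall eps, 0 < eps -> exists X delta, 0 < delta /\
    forall x mu, X <= x -> 1 <= mu <= 1 + delta -> Rabs (b (mu*x) / b x - 1) <= eps.
Proof. intros Hr [[X1 Hpos] _] [X2 Hb] Hso eps Heps.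
 set (K2 := K rho 2). assert (HK2 : 0 < K2) by (apply K2_pos; auto).
 set (ep := Rmin (K2/2) (eps*K2/12)).
 assert (Hep : 0 < ep) by (unfold ep; apply Rmin_glb_lt; nra).
 assert (Hep1 : ep <= K2/2) by apply Rmin_l. assert (Hep2 : ep <= eps*K2/12) by apply Rmin_r.
 destruct (Hso 4 ep ltac:(lra) Hep) as [X0 HX0].
 set (delta := Rmin 1 (eps/(4*(1-rho)))).
 assert (Hd : 0 < delta) by (unfold delta; apply Rmin_glb_lt; [lra| apply Rdiv_lt_0_compat; lra]).
 assert (Hd1 : delta <= 1) by apply Rmin_l. assert (Hd2 : delta <= eps/(4*(1-rho))) by apply Rmin_r.
 exists (Rmax (Rmax X0 X1) (Rmax X2 1)), delta. split; auto.
 intros x mu Hx Hmu.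
 assert (HX0' : X0 <= x) by (eapply Rle_trans; [|apply Hx]; eapply Rle_trans; [apply Rmax_l|apply Rmax_l]).
 assert (HX1' : X1 <= x) by (eapply Rle_trans; [|apply Hx]; eapply Rle_trans; [apply Rmax_r|apply Rmax_l]).
 assert (HX2' : X2 <= x) by (eapply Rle_trans; [|apply Hx]; eapply Rle_trans; [apply Rmax_l|apply Rmax_r]).
 assert (Hx1 : 1 <= x) by (eapply Rle_trans; [|apply Hx]; eapply Rle_trans; [apply Rmax_r|apply Rmax_r]).
 assert (Hmx : x <= mu * x) by nra.
 assert (Ha := HX0 (mu*x) ltac:(lra) 2 ltac:(lra)).
 assert (Hbb := HX0 x HX0' mu ltac:(lra)).
 assert (Hc := HX0 x HX0' (2*mu) ltac:(lra)).
 rewrite <- Rmult_assoc in Ha. fold K2 in Ha.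
 assert (P1 := Hpos x HX1'). assert (P2 := Hpos (mu*x) ltac:(lra)). assert (P3 := Hpos (2*mu*x) ltac:(nra)).
 assert (B1 := Hb x HX2'). assert (B2 := Hb (mu*x) ltac:(lra)).
 rewrite ln_div' in Ha, Hbb, Hc by lra.
 destruct (K_diff rho mu Hr ltac:(lra)) as [q [Hq1 Hq2]]. fold K2 in Hq1.
 set (e1 := (ln (ell (2*mu*x)) - ln (ell (mu*x))) / b (mu*x) - K2) in *.
 set (e2 := (ln (ell (mu*x)) - ln (ell x)) / b x - K rho mu) in *.
 set (e3 := (ln (ell (2*mu*x)) - ln (ell x)) / b x - K rho (2*mu)) in *.
 assert (E1 : ln (ell (2*mu*x)) - ln (ell (mu*x)) = b (mu*x) * (K2 + e1)) by (unfold e1; field; auto).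
 assert (E2 : ln (ell (mu*x)) - ln (ell x) = b x * (K rho mu + e2)) by (unfold e2; field; auto).
 assert (E3 : ln (ell (2*mu*x)) - ln (ell x) = b x * (K rho (2*mu) + e3)) by (unfold e3; field; auto).
 set (r := b (mu*x) / b x).
 assert (Hrr : r * (K2 + e1) = q * K2 + e3 - e2).
 { apply (Rmult_eq_reg_l (b x)); auto. unfold r.
   replace (b x * (b (mu * x) / b x * (K2 + e1))) with (b (mu*x) * (K2 + e1)) by (field; auto).
   rewrite <- E1. replace (b x * (q * K2 + e3 - e2)) with (b x * (K rho (2*mu) + e3) - b x * (K rho mu + e2)) by (rewrite <- Hq1; ring).
   rewrite <- E2, <- E3. ring. }
 apply Rabs_def2 in Ha. apply Rabs_def2 in Hbb. apply Rabs_def2 in Hc.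
 assert (Hq3 : 1 - q <= eps/4).
 { assert (- rho * (mu - 1) <= (1 - rho) * delta) by nra.
   assert ((1 - rho) * delta <= eps/4).
   { apply (Rmult_le_compat_l (1-rho)) in Hd2; [|lra]. 
     replace ((1 - rho) * (eps / (4 * (1 - rho)))) with (eps/4) in Hd2 by (field; lra). lra. }
   lra. }
 assert (Hden : K2/2 <= K2 + e1) by lra.
 apply Rabs_le. split.
 - assert ((r - 1) * (K2 + e1) >= - eps * (K2 + e1)) by nra. nra.
 - assert ((r - 1) * (K2 + e1) <= eps * (K2 + e1)) by nra. nra.
Qed.

Lemma T2_eq k n : T2 k n = / INR (k n) * gsum (Ln k n) (k n) (pred (k n)).
Proof. unfold T2, gsum. f_equal. apply sum_eq. intros i _. unfold zz. f_equal. unfold Rdiv. ring. Qed.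

Lemma bounds_n (mu0 : R -> R) (k : nat -> nat) n :
  (forall t, 0 < t -> improper_int0 (fun x => ln (1 + x / t) * exp (- x)) (mu0 t)) ->
  (1 <= k n)%nat -> 2 <= Ln k n ->
  let L := Ln k n in let κ := INR (k n) in let ℓ := ln (INR (k n)) in
  let m := mu0 L in let T := T2 k n in let Z := sum_f_R0 (zz (k n)) (pred (k n)) in
  T + /(L+ℓ) * (1 - /κ - /κ * Z) <= m /\ m <= T + /L * (1 - /κ * Z) /\
  1/L - 1/(L*L) <= m /\ m <= 1/L - 1/(L*L) + 2/(L*L*L) /\
  Rabs (κ - Z - ℓ/2 - 1) <= /2.
Proof. intros Hmu Hk HL L κ ℓ m T Z.
 assert (Hi := Hmu L ltac:(unfold L; lra)). fold (fL L) in Hi.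
 assert (HT : T = / κ * gsum L (k n) (pred (k n))) by apply T2_eq.
 split; [|split; [|split; [|split]]].
 - rewrite HT. assert (H := T2_lower L (k n) m ltac:(unfold L; lra) Hk Hi).
   unfold κ, ℓ, Z. lra.
 - rewrite HT. assert (H := T2_upper L (k n) m ltac:(unfold L; lra) Hk Hi).
   unfold κ, Z. lra.
 - apply mu0_lower; auto. unfold L; lra.
 - apply mu0_upper; auto. unfold L; lra.
 - apply kD_bound; auto. Qed.

Definition Hk_prop (k : nat -> nat) := forall n, (2<=n)%nat -> (1<=k n)%nat /\ (k n < n)%nat.

Lemma good_ev k : Hk_prop k -> cv_inf (fun n => INR (k n)) ->
  Un_cv (fun n => ln (INR (k n)) / ln (INR n)) 0 ->
  eventually_N (fun n => (2<=n)%nat /\ 2 <= Ln k n /\ 1 <= ln (INR (k n))).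
Proof. intros Hk Hinf Hr. apply ev_and; [apply ev_ge|]. apply ev_and.
 apply (L_inf k Hk Hinf Hr). apply (lk_inf k Hinf). Qed.

Lemma X2_cv (mu0 : R -> R) (k : nat -> nat) : Hk_prop k -> cv_inf (fun n => INR (k n)) ->
  Un_cv (fun n => ln (INR (k n)) / ln (INR n)) 0 ->
  (forall t, 0 < t -> improper_int0 (fun x => ln (1 + x / t) * exp (- x)) (mu0 t)) ->
  Un_cv (fun n => a_n mu0 k n (T2 k n) * INR (k n) / ln (INR (k n))) (/2).
Proof. intros Hk Hinf Hr Hmu.
 assert (HG := good_ev k Hk Hinf Hr).
 assert (HLi := L_inf k Hk Hinf Hr). assert (Hli := lk_inf k Hinf).
 assert (CiL := inf_inv _ HLi). assert (Cil := inf_inv _ Hli). assert (Cik := inf_inv _ Hinf).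
 assert (ClL := lkL_cv k Hk Hinf Hr). assert (Clk := lkk_cv k Hinf).
 set (u := fun n => (mu0 (Ln k n) - T2 k n) * Ln k n * INR (k n) / ln (INR (k n))).
 set (w := fun n => T2 k n * Ln k n).
 assert (Cu : Un_cv u (/2)).
 { apply (squeeze (fun n => (/2 - /2 * / ln (INR (k n))) * /(1 + ln (INR (k n)) / Ln k n)) _
                  (fun n => /2 + 3/2 * / ln (INR (k n)))).
   - eapply ev_mono; [|exact HG]. intros n [H1 [H2 H3]]. destruct (Hk n H1) as [Ha Hb].
     destruct (bounds_n mu0 k n Hmu Ha H2) as [B1 [B2 [B3 [B4 B5]]]].
     unfold u. apply alg_u with (Z := sum_f_R0 (zz (k n)) (pred (k n))); auto; try lra.
     apply INR_ge1; auto.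
   - apply cv_val with ((/2 - /2 * 0) * /(1 + 0)); [|field].
     apply CV_mult. apply CV_minus. apply cv_const. apply CV_mult. apply cv_const. auto.
     apply cv_inv. apply CV_plus. apply cv_const. auto. lra.
   - apply cv_val with (/2 + 3/2 * 0); [|ring]. apply CV_plus. apply cv_const. apply CV_mult. apply cv_const. auto. }
 assert (Cw : Un_cv w 1).
 { apply (squeeze (fun n => 1 - / Ln k n - /2 * (ln (INR (k n)) / INR (k n)) - 3/2 * / INR (k n)) _
                  (fun n => 1 - / Ln k n + 2 * (/ Ln k n * / Ln k n))).
   - eapply ev_mono; [|exact HG]. intros n [H1 [H2 H3]]. destruct (Hk n H1) as [Ha Hb].
     destruct (bounds_n mu0 k n Hmu Ha H2) as [B1 [B2 [B3 [B4 B5]]]].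
     unfold w. apply alg_w with (Z := sum_f_R0 (zz (k n)) (pred (k n))) (m := mu0 (Ln k n)); auto; try lra.
     apply INR_ge1; auto.
   - apply cv_val with (1 - 0 - /2 * 0 - 3/2 * 0); [|ring].
     apply CV_minus. apply CV_minus. apply CV_minus. apply cv_const. auto. apply CV_mult. apply cv_const. auto. apply CV_mult. apply cv_const. auto.
   - apply cv_val with (1 - 0 + 2 * (0 * 0)); [|ring].
     apply CV_plus. apply CV_minus. apply cv_const. auto. apply CV_mult. apply cv_const. apply CV_mult; auto. }
 assert (Hw2 : eventually_N (fun n => /2 < w n)) by (apply (cv_gt w 1); auto; lra).
 apply (cv_ext (fun n => u n * / w n)).
 - apply cv_val with (/2 * /1); [|field]. apply CV_mult; auto. apply cv_inv; [exact Cw|lra].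
 - eapply ev_mono; [|exact (ev_and _ _ HG Hw2)].
   intros n [[H1 [H2 H3]] H4]. unfold u, w in *. unfold a_n.
   assert (T2 k n <> 0). { intro Z. rewrite Z in H4. lra. }
   field. repeat split; lra.
Qed.

Lemma X3_cv (mu0 : R -> R) (k : nat -> nat) : Hk_prop k -> cv_inf (fun n => INR (k n)) ->
  Un_cv (fun n => ln (INR (k n)) / ln (INR n)) 0 ->
  (forall t, 0 < t -> improper_int0 (fun x => ln (1 + x / t) * exp (- x)) (mu0 t)) ->
  Un_cv (fun n => a_n mu0 k n (T3 k n) * Ln k n) (-1).
Proof. intros Hk Hinf Hr Hmu.
 assert (HG := good_ev k Hk Hinf Hr).
 assert (HLi := L_inf k Hk Hinf Hr). assert (CiL := inf_inv _ HLi).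
 apply (squeeze (fun _ => -1) _ (fun n => -1 + 2 * / Ln k n)).
 - eapply ev_mono; [|exact HG]. intros n [H1 [H2 H3]]. destruct (Hk n H1) as [Ha Hb].
   destruct (bounds_n mu0 k n Hmu Ha H2) as [B1 [B2 [B3 [B4 B5]]]].
   unfold a_n, T3. apply alg_3; auto; lra.
 - apply cv_const.
 - apply cv_val with (-1 + 2 * 0); [|ring]. apply CV_plus. apply cv_const. apply CV_mult. apply cv_const. auto.
Qed.

Lemma a1_zero (mu0 : R -> R) (k : nat -> nat) : Hk_prop k -> cv_inf (fun n => INR (k n)) ->
  Un_cv (fun n => ln (INR (k n)) / ln (INR n)) 0 ->
  (forall t, 0 < t -> improper_int0 (fun x => ln (1 + x / t) * exp (- x)) (mu0 t)) ->
  eventually_N (fun n => a_n mu0 k n (T1 mu0 k n) = 0).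
Proof. intros Hk Hinf Hr Hmu.
 eapply ev_mono; [|exact (good_ev k Hk Hinf Hr)]. intros n [H1 [H2 H3]]. destruct (Hk n H1) as [Ha Hb].
 destruct (bounds_n mu0 k n Hmu Ha H2) as [B1 [B2 [B3 [B4 B5]]]].
 unfold a_n, T1. set (L := Ln k n) in *.
 assert (1/L - 1/(L*L) > 0).
 { replace (1/L - 1/(L*L)) with ((L - 1)/(L*L)) by (field; lra). apply Rdiv_lt_0_compat; nra. }
 field. lra. Qed.

Lemma mu_cv (k : nat -> nat) : Hk_prop k -> cv_inf (fun n => INR (k n)) ->
  Un_cv (fun n => ln (INR (k n)) / ln (INR n)) 0 ->
  Un_cv (fun n => ln (INR n) / Ln k n) 1.
Proof. intros Hk Hinf Hr.
 set (r := fun n => ln (INR (k n)) / ln (INR n)).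
 apply (cv_ext (fun n => / (1 - r n))).
 - apply cv_val with (/ (1 - 0)); [|field]. apply cv_inv.
   apply (CV_minus (fun _ => 1)); auto. apply cv_const. lra.
 - apply (ev_mono (fun n => (2 <= n)%nat /\ 1 <= ln (INR n))).
   + intros n [H1 H2]. destruct (Hk n H1) as [Ha Hb]. rewrite Ln_eq by auto. unfold r.
     assert (Hn0 := lk_nonneg k n Ha).
     apply lt_INR in Hb. assert (0 < INR (k n)) by (apply lt_0_INR; lia).
     assert (ln (INR (k n)) < ln (INR n)) by (apply ln_increasing; lra).
     field. lra.
   + apply ev_and; [apply ev_ge|]. apply (lnn_inf k Hk Hinf). Qed.

Lemma R_cv ell b rho (k : nat -> nat) : Hk_prop k -> cv_inf (fun n => INR (k n)) ->
  Un_cv (fun n => ln (INR (k n)) / ln (INR n)) 0 ->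
  rho <= 0 -> slowly_varying ell -> eventually_R (fun x => b x <> 0) -> second_order ell b rho ->
  Un_cv (fun n => b (ln (INR n)) / b (Ln k n)) 1.
Proof. intros Hk Hinf Hr Hrho Hsv Hbnz Hso.
 apply ev_cv. intros eps Heps.
 destruct (rv_unif ell b rho Hrho Hsv Hbnz Hso (eps/2) ltac:(lra)) as [X [d [Hd HX]]].
 assert (HLi := L_inf k Hk Hinf Hr).
 assert (Hm := cv_ev _ _ d (mu_cv k Hk Hinf Hr) Hd).
 eapply ev_mono; [|exact (ev_and _ _ (good_ev k Hk Hinf Hr) (ev_and _ _ (HLi X) Hm))].
 intros n [[H1 [H2 H3]] [H4 H5]]. destruct (Hk n H1) as [Ha Hb].
 assert (Hn0 := lk_nonneg k n Ha).
 assert (HL : Ln k n = ln (INR n) - ln (INR (k n))) by (apply Ln_eq; auto).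
 apply Rabs_def2 in H5.
 assert (Hmu1 : 1 <= ln (INR n) / Ln k n).
 { apply (Rmult_le_reg_r (Ln k n)); [lra|]. unfold Rdiv. rewrite Rmult_assoc, Rinv_l by lra. lra. }
 assert (E : ln (INR n) = (ln (INR n) / Ln k n) * Ln k n) by (field; lra).
 assert (HH := HX (Ln k n) (ln (INR n) / Ln k n) H4 ltac:(lra)).
 rewrite <- E in HH. lra. Qed.

Lemma amse_diff mu0 b theta k n T : a_n mu0 k n (T1 mu0 k n) = 0 ->
  AMSE mu0 b theta k n T - AMSE1 mu0 b theta k n =
  theta * a_n mu0 k n T * (theta * a_n mu0 k n T + 2 * b (Ln k n)).
Proof. intros H. unfold AMSE1, AMSE. rewrite H. ring. Qed.

Lemma evR_comp (P : R -> Prop) (x : nat -> R) : eventually_R P -> cv_inf x -> eventually_N (fun n => P (x n)).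
Proof. intros [X HX] Hx. eapply ev_mono; [|exact (Hx X)]. intros n Hn. apply HX; auto. Qed.

Lemma lim_comp f l (x : nat -> R) : lim_infty f l -> cv_inf x -> Un_cv (fun n => f (x n)) l.
Proof. intros Hf Hx. apply ev_cv. intros eps He. apply (evR_comp (fun y => Rabs (f y - l) < eps) x); auto. Qed.

Lemma sign2 θ X2 Bk a2 B κ ℓ : 0 < κ -> 0 < ℓ -> X2 = a2 * κ / ℓ -> Bk = B * κ / ℓ ->
  θ * a2 + 2 * B = (θ * X2 + 2 * Bk) * (ℓ / κ).
Proof. intros. subst. field. lra. Qed.

Lemma sign3 θ X3 W a3 B L : 0 < L -> X3 = a3 * L -> W = 2 * (L * B) ->
  θ * a3 + 2 * B = (θ * X3 + W) * / L.
Proof. intros. subst. field. lra. Qed.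

Lemma mpn a b : 0 < a -> b < 0 -> a * b < 0. Proof. intros; nra. Qed.
Lemma mpp a b : 0 < a -> 0 < b -> 0 < a * b. Proof. intros; nra. Qed.
Lemma mnn a b : a < 0 -> b < 0 -> 0 < a * b. Proof. intros; nra. Qed.
Lemma mnp a b : a < 0 -> 0 < b -> a * b < 0. Proof. intros; nra. Qed.
Lemma lt_sub x y : x - y < 0 -> x < y. Proof. intros; lra. Qed.
Lemma gt_sub x y : 0 < x - y -> y < x. Proof. intros; lra. Qed.

Theorem theorem3
  (F H ell b mu0 : R -> R) (theta rho x0 : R) (k : nat -> nat) :
  (* the cdf F and assumption (A.1) *)
  is_cdf F ->
  0 < theta ->
  0 <= x0 ->
  (forall x, x0 <= x -> 1 - F x = exp (- H x)) ->
  eventually_R (fun t => is_glb (fun x => x0 <= x /\ t <= H x) (Rpower t theta * ell t)) ->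
  slowly_varying ell ->
  (* assumption (A.2) *)
  rho <= 0 ->
  lim_infty b 0 ->
  eventually_R (fun x => b x <> 0) ->
  second_order ell b rho ->
  (* mu0(t) = int_0^infty log(1 + x/t) e^{-x} dx *)
  (forall t, 0 < t -> improper_int0 (fun x => ln (1 + x / t) * exp (- x)) (mu0 t)) ->
  (* the intermediate sequence k_n *)
  (forall n, (2 <= n)%nat -> (1 <= k n)%nat /\ (k n < n)%nat) ->
  (forall M : R, eventually_N (fun n => M <= INR (k n))) ->
  Un_cv (fun n => ln (INR (k n)) / ln (INR n)) 0 ->
  (exists lam : R, Un_cv (fun n => sqrt (INR (k n)) * b (Ln k n)) lam) ->
  (* (i) *)
  (eventually_R (fun x => b x <= 0) ->
   forall alpha : ext,
   seq_lim_ext (fun n => -4 * b (ln (INR n)) * INR (k n) / ln (INR (k n))) alpha ->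
   (R_lt_ext theta alpha ->
      eventually_N (fun n => AMSE2 mu0 b theta k n < AMSE1 mu0 b theta k n /\
                             AMSE1 mu0 b theta k n < AMSE3 mu0 b theta k n)) /\
   (ext_lt_R alpha theta ->
      eventually_N (fun n => AMSE1 mu0 b theta k n <
                             Rmin (AMSE2 mu0 b theta k n) (AMSE3 mu0 b theta k n))))
  /\
  (* (ii) *)
  (eventually_R (fun x => 0 <= b x) ->
   forall beta : ext,
   fun_lim_ext (fun x => 2 * (x * b x)) beta ->
   (R_lt_ext theta beta ->
      eventually_N (fun n => AMSE3 mu0 b theta k n < AMSE1 mu0 b theta k n /\
                             AMSE1 mu0 b theta k n < AMSE2 mu0 b theta k n)) /\
   (ext_lt_R beta theta ->
      eventually_N (fun n => AMSE1 mu0 b theta k n <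
                             Rmin (AMSE2 mu0 b theta k n) (AMSE3 mu0 b theta k n)))).

Proof.
intros HF Hth Hx0 HFH Hglb Hsv Hrho Hb0 Hbnz Hso Hmu Hk Hkinf Hr Hlam.
assert (Hkp : Hk_prop k) by exact Hk.
assert (CX2 := X2_cv mu0 k Hkp Hkinf Hr Hmu).
assert (CX3 := X3_cv mu0 k Hkp Hkinf Hr Hmu).
assert (Ha1 := a1_zero mu0 k Hkp Hkinf Hr Hmu).
assert (CR := R_cv ell b rho k Hkp Hkinf Hr Hrho Hsv Hbnz Hso).
assert (HLi := L_inf k Hkp Hkinf Hr).
assert (HG := good_ev k Hkp Hkinf Hr).
assert (HbL : eventually_N (fun n => b (Ln k n) <> 0)) by (apply (evR_comp (fun x => b x <> 0)); auto).
assert (Hbn : eventually_N (fun n => b (ln (INR n)) <> 0)).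
{ apply (evR_comp (fun x => b x <> 0) (fun n => ln (INR n))); auto. apply (lnn_inf k Hkp Hkinf). }
assert (Ha2 : eventually_N (fun n => 0 < a_n mu0 k n (T2 k n))).
{ eapply ev_mono; [|exact (ev_and _ _ HG (cv_gt _ _ 0 CX2 ltac:(lra)))].
  intros n [[H1 [H2 H3]] H4]. destruct (Hkp n H1) as [Hka _].
  assert (0 < INR (k n)) by (apply lt_0_INR; lia).
  assert (0 < INR (k n) / ln (INR (k n))) by (apply Rdiv_lt_0_compat; lra).
  replace (a_n mu0 k n (T2 k n) * INR (k n) / ln (INR (k n))) with
    (a_n mu0 k n (T2 k n) * (INR (k n) / ln (INR (k n)))) in H4 by (unfold Rdiv; ring).
  nra. }
assert (Ha3 : eventually_N (fun n => a_n mu0 k n (T3 k n) < 0)).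
{ eapply ev_mono; [|exact (ev_and _ _ HG (cv_lt _ _ (-/2) CX3 ltac:(lra)))].
  intros n [[H1 [H2 H3]] H4]. nra. }
set (X2 := fun n => a_n mu0 k n (T2 k n) * INR (k n) / ln (INR (k n))) in *.
set (X3 := fun n => a_n mu0 k n (T3 k n) * Ln k n) in *.
set (Rr := fun n => b (ln (INR n)) / b (Ln k n)) in *.
set (V := fun n => -4 * b (ln (INR n)) * INR (k n) / ln (INR (k n))).
set (Q := fun n => theta * X2 n - V n * / (2 * Rr n)).
assert (LINK2 : eventually_N (fun n => theta * a_n mu0 k n (T2 k n) + 2 * b (Ln k n) =
        Q n * (ln (INR (k n)) / INR (k n)))).
{ eapply ev_mono; [|exact (ev_and _ _ HG (ev_and _ _ HbL Hbn))]. intros n [[H1 [H2 H3]] [B1 B2]].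
  destruct (Hkp n H1) as [Hka _]. assert (0 < INR (k n)) by (apply lt_0_INR; lia).
  unfold Q, V, Rr, X2. field. repeat split; lra. }
assert (D2 : eventually_N (fun n => AMSE2 mu0 b theta k n - AMSE1 mu0 b theta k n =
   theta * a_n mu0 k n (T2 k n) * (theta * a_n mu0 k n (T2 k n) + 2 * b (Ln k n)))).
{ eapply ev_mono; [|exact Ha1]. intros n E. apply amse_diff; auto. }
assert (D3 : eventually_N (fun n => AMSE3 mu0 b theta k n - AMSE1 mu0 b theta k n =
   theta * a_n mu0 k n (T3 k n) * (theta * a_n mu0 k n (T3 k n) + 2 * b (Ln k n)))).
{ eapply ev_mono; [|exact Ha1]. intros n E. apply amse_diff; auto. }
assert (POS : eventually_N (fun n => 0 < ln (INR (k n)) / INR (k n) /\ 0 < Ln k n)).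
{ eapply ev_mono; [|exact HG]. intros n [H1 [H2 H3]]. destruct (Hkp n H1) as [Hka _].
  assert (0 < INR (k n)) by (apply lt_0_INR; lia). split; [apply Rdiv_lt_0_compat|]; lra. }
assert (S2neg : eventually_N (fun n => Q n < 0) -> eventually_N (fun n => AMSE2 mu0 b theta k n < AMSE1 mu0 b theta k n)).
{ intros HQ. eapply ev_mono; [|exact (ev_and _ _ HQ (ev_and _ _ LINK2 (ev_and _ _ D2 (ev_and _ _ POS Ha2))))].
  intros n [Q1 [L1 [E1 [[P1 P2] A1]]]]. 
  assert (theta * a_n mu0 k n (T2 k n) + 2 * b (Ln k n) < 0) by (rewrite L1; apply mnp; auto).
  apply lt_sub; rewrite E1; apply mpn; [apply Rmult_lt_0_compat; lra|auto]. }
assert (S2pos : eventually_N (fun n => 0 < Q n) -> eventually_N (fun n => AMSE1 mu0 b theta k n < AMSE2 mu0 b theta k n)).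
{ intros HQ. eapply ev_mono; [|exact (ev_and _ _ HQ (ev_and _ _ LINK2 (ev_and _ _ D2 (ev_and _ _ POS Ha2))))].
  intros n [Q1 [L1 [E1 [[P1 P2] A1]]]]. 
  assert (0 < theta * a_n mu0 k n (T2 k n) + 2 * b (Ln k n)) by (rewrite L1; apply mpp; auto).
  apply gt_sub; rewrite E1; apply mpp; [apply Rmult_lt_0_compat; lra|auto]. }
split.
- intros Hneg alpha Halpha.
  assert (HBn : eventually_N (fun n => b (Ln k n) <= 0)) by (apply (evR_comp (fun x => b x <= 0)); auto).
  assert (Cmp13 : eventually_N (fun n => AMSE1 mu0 b theta k n < AMSE3 mu0 b theta k n)).
  { eapply ev_mono; [|exact (ev_and _ _ D3 (ev_and _ _ Ha3 HBn))].
    intros n [E [A3 B0]].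
    assert (theta * a_n mu0 k n (T3 k n) + 2 * b (Ln k n) < 0) by nra.
    apply gt_sub; rewrite E; apply mnn; [apply mpn; lra|auto]. }
  split.
  + intros Hgt. apply (ev_mono (fun n => (AMSE2 mu0 b theta k n < AMSE1 mu0 b theta k n) /\ AMSE1 mu0 b theta k n < AMSE3 mu0 b theta k n)); [auto|].
    apply ev_and; auto. apply S2neg.
    destruct alpha as [r|]; simpl in Halpha, Hgt.
    * apply (cv_lt _ (theta * /2 - r * / (2 * 1))); [|lra].
      apply CV_minus. apply CV_mult. apply cv_const. exact CX2. apply CV_mult. exact Halpha.
      apply cv_inv. apply CV_mult. apply cv_const. exact CR. lra.
    * eapply ev_mono; [|exact (ev_and _ _ (Halpha (8*theta)) (ev_and _ _ (cv_ev _ _ (/2) CR ltac:(lra)) (cv_lt _ _ 1 CX2 ltac:(lra))))].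
      intros n [HV [HR HX]]. apply Rabs_def2 in HR. unfold Q. fold (V n) in HV.
      assert (/ (2 * Rr n) > / 3) by (apply Rinv_lt_contravar; nra).
      nra.
  + intros Hlt. destruct alpha as [r|]; simpl in Halpha, Hlt; [|contradiction].
    assert (C12 : eventually_N (fun n => AMSE1 mu0 b theta k n < AMSE2 mu0 b theta k n)).
    { apply S2pos. apply (cv_gt _ (theta * /2 - r * / (2 * 1))); [|lra].
      apply CV_minus. apply CV_mult. apply cv_const. exact CX2. apply CV_mult. exact Halpha.
      apply cv_inv. apply CV_mult. apply cv_const. exact CR. lra. }
    eapply ev_mono; [|exact (ev_and _ _ C12 Cmp13)]. intros n [A B]. apply Rmin_glb_lt; auto.
- intros Hpos beta Hbeta.
  assert (HBp : eventually_N (fun n => 0 <= b (Ln k n))) by (apply (evR_comp (fun x => 0 <= b x)); auto).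
  assert (C12 : eventually_N (fun n => AMSE1 mu0 b theta k n < AMSE2 mu0 b theta k n)).
  { eapply ev_mono; [|exact (ev_and _ _ D2 (ev_and _ _ Ha2 HBp))].
    intros n [E [A2 B0]].
    assert (0 < theta * a_n mu0 k n (T2 k n) + 2 * b (Ln k n)) by nra.
    apply gt_sub; rewrite E; apply mpp; [apply Rmult_lt_0_compat; lra|auto]. }
  set (W := fun n => 2 * (Ln k n * b (Ln k n))).
  set (Y := fun n => theta * X3 n + W n).
  assert (LINK3 : eventually_N (fun n => theta * a_n mu0 k n (T3 k n) + 2 * b (Ln k n) = Y n * / Ln k n)).
  { eapply ev_mono; [|exact POS]. intros n [P1 P2]. unfold Y, W, X3. field. lra. }
  split.
  + intros Hgt.
    assert (HY : eventually_N (fun n => 0 < Y n)).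
    { destruct beta as [l|]; simpl in Hbeta, Hgt.
      * apply (cv_gt _ (theta * -1 + l)); [|lra]. apply CV_plus. apply CV_mult. apply cv_const. exact CX3.
        apply (lim_comp (fun x => 2 * (x * b x))); auto.
      * eapply ev_mono; [|exact (ev_and _ _ (evR_comp _ _ (Hbeta (3*theta)) HLi) (cv_gt _ _ (-2) CX3 ltac:(lra)))].
        intros n [HW HX]. unfold Y, W. cbv beta in HW. nra. }
    eapply ev_mono; [|exact (ev_and _ _ C12 (ev_and _ _ HY (ev_and _ _ LINK3 (ev_and _ _ D3 (ev_and _ _ POS Ha3)))))].
    intros n [C [Y1 [L1 [E1 [[P1 P2] A1]]]]]. split; auto.
    assert (0 < / Ln k n) by (apply Rinv_0_lt_compat; lra).
    assert (0 < theta * a_n mu0 k n (T3 k n) + 2 * b (Ln k n)) by (rewrite L1; apply mpp; auto).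
    apply lt_sub; rewrite E1; apply mnp; [apply mpn; lra|auto].
  + intros Hlt. destruct beta as [l|]; simpl in Hbeta, Hlt; [|contradiction].
    assert (HY : eventually_N (fun n => Y n < 0)).
    { apply (cv_lt _ (theta * -1 + l)); [|lra]. apply CV_plus. apply CV_mult. apply cv_const. exact CX3.
      apply (lim_comp (fun x => 2 * (x * b x))); auto. }
    eapply ev_mono; [|exact (ev_and _ _ C12 (ev_and _ _ HY (ev_and _ _ LINK3 (ev_and _ _ D3 (ev_and _ _ POS Ha3)))))].
    intros n [C [Y1 [L1 [E1 [[P1 P2] A1]]]]]. apply Rmin_glb_lt; auto.
    assert (0 < / Ln k n) by (apply Rinv_0_lt_compat; lra).
    assert (theta * a_n mu0 k n (T3 k n) + 2 * b (Ln k n) < 0) by (rewrite L1; apply mnp; auto).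
    apply gt_sub; rewrite E1; apply mnn; [apply mpn; lra|auto].
Qed.
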